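(* Let $k\ge 2$, let $B=M\cup\{\omega_1,\ldots,\omega_p\}$ with $p\ge 1$ and $\omega_1,\ldots,\omega_p\in P_k\setminus M$, and let $F$ be a finite system of functions from $P_k(n)$. Then $$I_B(F)\le\left\lceil \log_{u(B)}\bigl(d(F)+1\bigr)\right\rceil .$$
   Context: Let $k\ge 2$ be an integer and $E_k=\{0,1,\ldots,k-1\}$. $P_k(n)$ denotes the set of all functions $E_k^n\to E_k$, and $P_k=\bigcup_n P_k(n)$. Tuples in $E_k^n$ are ordered componentwise: $\tilde\alpha\le\tilde\beta$ iff $\alpha_j\le\beta_j$ for all $j$. A function $f$ is monotone if $\tilde\alpha\le\tilde\beta$ implies $f(\tilde\alpha)\le f(\tilde\beta)$; $M$ is the set of all monotone functions in $P_k$ (of all arities, including constants). A basis is a set $B=M\cup\{\omega_1,\ldots,\omega_p\}$ with $p\ge1$ and $\omega_i\in P_k\setminus M$. A circuit over $B$ with inputs $x_1,\ldots,x_n$ is a finite directed acyclic graph whose source nodes are labelled by the variables $x_1,\ldots,x_n$ and each of whose other nodes (gates) is labelled by a $q$-ary function from $B$ and has $q$ ordered incoming edges; each node computes a function of $P_k(n)$ in the obvious way. A circuit realizes a system $F$ of functions of $x_1,\ldots,x_n$ if every function of $F$ is computed at some node. Gates labelled by functions of $M$ have weight $0$, gates labelled by some $\omega_i$ have weight $1$. The non-monotone complexity $I_B(S)$ of a circuit $S$ is the sum of the weights of its gates; $I_B(F)$ is the minimum of $I_B(S)$ over all circuits $S$ over $B$ realizing $F$. A chain is a sequence $\tilde\alpha_1,\ldots,\tilde\alpha_r$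 of pairwise distinct tuples of $E_k^n$ with $\tilde\alpha_i\le\tilde\alpha_{i+1}$ for $i=1,\ldots,r-1$. A pair $(\tilde\alpha,\tilde\beta)$ with $\tilde\alpha\le\tilde\beta$ is a jump for a system $F$ if $f(\tilde\alpha)>f(\tilde\beta)$ for at least one $f\in F$. For a chain $C=(\tilde\alpha_1,\ldots,\tilde\alpha_r)$, the decrease $d_C(F)$ is the number of $i\in\{1,\ldots,r-1\}$ such that $(\tilde\alpha_i,\tilde\alpha_{i+1})$ is a jump for $F$. The decrease $d(F)$ is the maximum of $d_C(F)$ over all chains $C$ in $E_k^n$. For $f\in P_k(n)$ and a chain $C=(\tilde\alpha_1,\ldots,\tilde\alpha_r)$ in $E_k^n$, $u_C(f)$ is the maximum length $t$ of a subsequence $\tilde\beta_1,\ldots,\tilde\beta_t$ of $C$ (taken in the order of $C$) with $f(\tilde\beta_1)>f(\tilde\beta_2)>\cdots>f(\tilde\beta_t)$. The inversion power $u(f)$ is the maximum of $u_C(f)$ over all chains $C$ in $E_k^n$, and the inversion power of the basis is $u(B)=\max\{u(f): f\in B\}$ (note $u(B)\ge 2$ since $B$ contains a non-monotone function). *)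

(* Defs.v *)
From HB Require Import structures.
From mathcomp Require Import all_boot.
From Stdlib Require List.

Set Implicit Arguments.
Unset Strict Implicit.
Unset Printing Implicit Defensive.

(* E_k = 'I_k ;  E_k^n = tup k n ;  P_k(n) = fn k n ;  P_k = Pk k *)
Definition tup (k n : nat) := {ffun 'I_n -> 'I_k}.
Definition fn (k n : nat) := tup k n -> 'I_k.
Definition Pk (k : nat) := {q : nat & fn k q}.

Definition tle (k n : nat) (a b : tup k n) : bool := [forall j, a j <= b j].

Definition monotoneb (k n : nat) (f : fn k n) : bool :=
  [forall a : tup k n, forall b : tup k n, tle a b ==> (f a <= f b)].

Definition inB (k : nat) (omegas : seq (Pk k)) (f : Pk k) : Prop :=
  monotoneb (projT2 f) \/ Stdlib.Lists.List.In f omegas.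

(* A circuit is given in topological order: nodes 'I_n are the inputs
   x_1..x_n, then each gate adds one node; a gate on a circuit with m nodes
   has a label (a function of some arity q) and q ordered incoming edges
   from earlier nodes. *)
Record gate (k m : nat) := Gate {
  garity : nat;
  gfun : fn k garity;
  gins : 'I_garity -> 'I_m }.

Inductive circuit (k n : nat) : nat -> Type :=
| CInputs : circuit k n n
| CGate (m : nat) : circuit k n m -> gate k m -> circuit k n m.+1.

Arguments CInputs {k n}.

Fixpoint cval (k n m : nat) (C : circuit k n m) (x : tup k n) : {ffun 'I_m -> 'I_k} :=
  match C in circuit _ _ m0 return {ffun 'I_m0 -> 'I_k} with
  | CInputs => x
  | @CGate _ _ m' C' g =>
      let v := cval C' x in
      [ffun i : 'I_m'.+1 =>
        match unlift ord_max i with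
        | Some j => v j
        | None => (@gfun k m' g) [ffun j => v (@gins k m' g j)]
        end]
  end.

Fixpoint cvalid (k n m : nat) (omegas : seq (Pk k)) (C : circuit k n m) : Prop :=
  match C with
  | CInputs => True
  | @CGate _ _ m' C' g => cvalid omegas C' /\ inB omegas (existT _ (@garity k m' g) (@gfun k m' g))
  end.

Fixpoint cweight (k n m : nat) (C : circuit k n m) : nat :=
  match C with
  | CInputs => 0
  | @CGate _ _ m' C' g => cweight C' + (~~ monotoneb (@gfun k m' g))
  end.

Definition realizes (k n m : nat) (C : circuit k n m) (F : seq (fn k n)) : Prop :=
  forall f, Stdlib.Lists.List.In f F -> exists i : 'I_m, forall x, cval C x i = f x.

(* I_B(F) <= c  (I_B(F) is the minimum complexity of a circuit over B
   realizing F) *)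
Definition IB_le (k n : nat) (omegas : seq (Pk k)) (F : seq (fn k n)) (c : nat) : Prop :=
  exists (m : nat) (C : circuit k n m),
    [/\ cvalid omegas C, realizes C F & cweight C <= c].

Definition is_max (P : nat -> Prop) (v : nat) : Prop :=
  P v /\ forall w, P w -> w <= v.

Definition chain (k n : nat) (s : seq (tup k n)) : bool :=
  uniq s && sorted (@tle k n) s.

Definition jump (k n : nat) (F : seq (fn k n)) (a b : tup k n) : bool :=
  tle a b && has (fun f : fn k n => f b < f a) F.

Definition dC (k n : nat) (F : seq (fn k n)) (s : seq (tup k n)) : nat :=
  count (fun p => jump F p.1 p.2) (zip s (behead s)).

Definition is_decrease (k n : nat) (F : seq (fn k n)) (d : nat) : Prop :=
  is_max (fun t => exists s, chain s /\ t = dC F s) d.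

(* u_C(f): longest subsequence (mask) of C on which f strictly decreases *)
Definition uC (k n : nat) (f : fn k n) (s : seq (tup k n)) : nat :=
  \max_(b : (size s).-tuple bool | sorted (fun x y => f y < f x) (mask b s))
     size (mask b s).

Definition is_inv_power (k n : nat) (f : fn k n) (v : nat) : Prop :=
  is_max (fun t => exists s, chain s /\ t = uC f s) v.

Definition is_inv_power_basis (k : nat) (omegas : seq (Pk k)) (v : nat) : Prop :=
  is_max (fun t => exists f : Pk k, inB omegas f /\ is_inv_power (projT2 f) t) v.

(* Main.v *)
From Stdlib Require Import Classical ClassicalEpsilon.
Require Import Defs.
From HB Require Import structures.
From mathcomp Require Import all_boot zify.


Set Implicit Arguments.
Unset Strict Implicit.
Unset Printing Implicit Defensive.

Lemma tle_refl k n : reflexive (@tle k n).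
Proof. by move=> a; apply/forallP => j. Qed.

Lemma tle_trans k n : transitive (@tle k n).
Proof.
move=> b a c /forallP H1 /forallP H2; apply/forallP => j.
exact: leq_trans (H1 j) (H2 j).
Qed.

Lemma tle_anti k n (a b : tup k n) : tle a b -> tle b a -> a = b.
Proof.
move=> /forallP H1 /forallP H2; apply/ffunP => j; apply/val_inj/eqP.
by rewrite eqn_leq H1 H2.
Qed.

Definition relmono k n m (C : circuit k n m) (t : tup k n -> nat) :=
  forall x y, tle (cval C x) (cval C y) -> t x <= t y.

Definition ext k n m m' (C : circuit k n m) (C' : circuit k n m') :=
  m <= m' /\ forall x (i : 'I_m) (j : 'I_m'), nat_of_ord j = i -> cval C' x j = cval C x i.

Lemma ext_refl k n m (C : circuit k n m) : ext C C.
Proof. by split=> // x i j /val_inj ->. Qed.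

Lemma ext_trans k n m1 m2 m3 (C1 : circuit k n m1) (C2 : circuit k n m2) (C3 : circuit k n m3) :
  ext C1 C2 -> ext C2 C3 -> ext C1 C3.
Proof.
move=> [h1 E1] [h2 E2]; split; first exact: leq_trans h1 h2.
move=> x i j ji; rewrite (E2 x (widen_ord h1 i)) //; exact: E1.
Qed.

Lemma ext_tle k n m m' (C : circuit k n m) (C' : circuit k n m') x y :
  ext C C' -> tle (cval C' x) (cval C' y) -> tle (cval C x) (cval C y).
Proof.
move=> [h E] /forallP H; apply/forallP => i.
by have := H (widen_ord h i); rewrite !(E _ i).
Qed.

Lemma ext_relmono k n m m' (C : circuit k n m) (C' : circuit k n m') t :
  ext C C' -> relmono C t -> relmono C' t.
Proof. by move=> e H x y /(ext_tle e); apply: H. Qed.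

Lemma ext_gate k n m (C : circuit k n m) g : ext C (CGate C g).
Proof.
split=> // x i j ji.
have -> : j = lift ord_max i.
  by apply: val_inj; rewrite /= ji /bump leqNgt ltn_ord.
by rewrite /= ffunE liftK.
Qed.

Lemma cval_gate_max k n m (C : circuit k n m) g x :
  cval (CGate C g) x ord_max = @gfun k m g [ffun j => cval C x (@gins k m g j)].
Proof. by rewrite /= ffunE unlift_none. Qed.

Lemma addgate k' n m omegas (C : circuit k'.+1 n m) (f : fn k'.+1 n) :
  cvalid omegas C -> relmono C (fun x => nat_of_ord (f x)) ->
  exists C' : circuit k'.+1 n m.+1,
    [/\ cvalid omegas C', cweight C' = cweight C, ext C C' &
        forall x, cval C' x ord_max = f x].
Proof.
move=> V R.
pose G : fn k'.+1 m := fun z => inord (\max_(x | tle (cval C x) z) nat_of_ord (f x)).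
have Gv z : nat_of_ord (G z) = \max_(x | tle (cval C x) z) nat_of_ord (f x).
  rewrite /G inordK // ltnS; apply/bigmax_leqP => x _; rewrite -ltnS; exact: ltn_ord.
have Gm : monotoneb G.
  apply/forallP => a; apply/forallP => b; apply/implyP => ab.
  rewrite !Gv; apply/bigmax_leqP => x xa.
  apply: leq_bigmax_cond; exact: tle_trans xa ab.
have Gf y : G (cval C y) = f y.
  apply/val_inj/eqP; rewrite /= Gv eqn_leq; apply/andP; split.
    by apply/bigmax_leqP => x /R.
  by apply: leq_bigmax_cond; apply: tle_refl.
exists (CGate C (@Gate k'.+1 m m G id)); split.
- by split => //; left.
- by rewrite /= Gm addn0.
- exact: ext_gate.
- move=> x; rewrite cval_gate_max /=.
  by rewrite -[X in G X = _]/[ffun j => cval C x j] ffunK Gf.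
Qed.

Lemma addmany k' n omegas q : forall (hs : 'I_q -> fn k'.+1 n) m (C : circuit k'.+1 n m),
  cvalid omegas C -> (forall c, relmono C (fun x => nat_of_ord (hs c x))) ->
  exists m' (C' : circuit k'.+1 n m') (pos : 'I_q -> 'I_m'),
    [/\ cvalid omegas C', cweight C' = cweight C, ext C C' &
        forall c x, cval C' x (pos c) = hs c x].
Proof.
elim: q => [|q IH] hs m C V R.
  have pos : 'I_0 -> 'I_m by case.
  exists m, C, pos; split => //; first exact: ext_refl.
  by case.
have [m1 [C1 [pos1 [V1 W1 E1 P1]]]] := IH (fun c => hs (lift ord_max c)) m C V (fun c => R _).
have [C2 [V2 W2 E2 P2]] := addgate (f := hs ord_max) V1 (ext_relmono E1 (R ord_max)).
pose pos2 (c : 'I_q.+1) : 'I_m1.+1 :=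
  match unlift ord_max c with Some c' => lift ord_max (pos1 c') | None => ord_max end.
exists m1.+1, C2, pos2; split.
- exact: V2.
- by rewrite W2 W1.
- exact: ext_trans E1 E2.
- move=> c x; rewrite /pos2; case: unliftP => [c' ->|->]; last by rewrite P2.
  rewrite -P1; case: E2 => _ E2; apply: E2; exact: lift_max.
Qed.

Lemma dec_size k q (w : fn k q) (a : seq (tup k q)) :
  sorted (fun x y => w y < w x) a -> size a <= k.
Proof.
move=> S.
have S' : sorted (fun x y : 'I_k => y < x) (map w a) by rewrite sorted_map.
have U : uniq (map w a).
  apply: (sorted_uniq _ _ S').
  - by move=> y x z /= h1 h2; exact: ltn_trans h2 h1.
  - by move=> x /=; rewrite ltnn.
rewrite -(size_map w).
apply: leq_trans (uniq_leq_size (s2 := enum 'I_k) U _) _.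
  by move=> x _; rewrite mem_enum.
by rewrite size_enum_ord.
Qed.

Lemma dec_trans k q (w : fn k q) : transitive (fun x y => w y < w x).
Proof. by move=> y x z /= h1 h2; exact: ltn_trans h2 h1. Qed.

Lemma gadget k' n omegas q (w : fn k'.+1 q) (a : seq (tup k'.+1 q)) m
  (C : circuit k'.+1 n m) (t : tup k'.+1 n -> nat) :
  inB omegas (existT _ q w) -> sorted (@tle _ _) a -> sorted (fun x y => w y < w x) a ->
  cvalid omegas C -> (forall x, t x < size a) -> relmono C t ->
  exists m' (C' : circuit k'.+1 n m') (i : 'I_m'),
   [/\ cvalid omegas C', cweight C' <= (cweight C).+1, ext C C' &
       forall x, nat_of_ord (cval C' x i) = (size a).-1 - t x].
Proof.
move=> Bw S1 S2 V tlt R.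
pose a0 : tup k'.+1 q := [ffun => ord0].
pose hs (c : 'I_q) : fn k'.+1 n := fun x => nth a0 a (t x) c.
have Rh c : relmono C (fun x => nat_of_ord (hs c x)).
  move=> x y H.
  have := sorted_leq_nth (@tle_trans _ _) (@tle_refl _ _) a0 S1 _ _ (tlt x) (tlt y) (R _ _ H).
  by move/forallP => /(_ c).
have [m1 [C1 [pos [V1 W1 E1 P1]]]] := addmany V Rh.
pose C2 := CGate C1 (@Gate k'.+1 m1 q w pos).
have E2 : ext C1 C2 by exact: ext_gate.
have P2 x : cval C2 x ord_max = w (nth a0 a (t x)).
  rewrite cval_gate_max /=; congr w; apply/ffunP => j; by rewrite ffunE P1.
have sz : size a <= k'.+1 by exact: dec_size S2.
have bnd x : (size a).-1 - t x < k'.+1.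
  apply: leq_ltn_trans (leq_subr _ _) _.
  by have := tlt x; case: (size a) sz => // s' /= h _.
have R2 : relmono C2 (fun x => nat_of_ord (inord ((size a).-1 - t x) : 'I_k'.+1)).
  move=> x y H; rewrite !inordK //.
  have := forallP H ord_max; rewrite !P2 => Hw.
  apply: leq_sub2l; rewrite leqNgt; apply/negP => lt.
  have := sorted_ltn_nth (@dec_trans _ _ w) a0 S2 _ _ (tlt x) (tlt y) lt.
  by rewrite /= ltnNge Hw.
have [C3 [V3 W3 E3 P3]] := addgate (conj V1 Bw : cvalid omegas C2) R2.
exists m1.+2, C3, ord_max; split.
- exact: V3.
- by rewrite W3 /= W1; case: (~~ _); rewrite ?addn1 ?addn0.
- exact: ext_trans (ext_trans E1 E2) E3.
- by move=> x; rewrite P3 inordK.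
Qed.

Definition chainP k n (F : seq (fn k n)) x c :=
  exists s, chain (x :: s) /\ dC F (x :: s) = c.

Definition Pb k n (F : seq (fn k n)) x c : bool :=
  if excluded_middle_informative (chainP F x c) then true else false.

Lemma PbP k n (F : seq (fn k n)) x c : Pb F x c <-> chainP F x c.
Proof. by rewrite /Pb; case: excluded_middle_informative. Qed.

Definition dlt k n (F : seq (fn k n)) d x := \max_(c < d.+1 | Pb F x c) nat_of_ord c.

Lemma dlt_le k n (F : seq (fn k n)) d x : dlt F d x <= d.
Proof. by apply/bigmax_leqP => c _; rewrite -ltnS. Qed.

Lemma dlt_ge k n (F : seq (fn k n)) d x c :
  is_decrease F d -> chainP F x c -> c <= dlt F d x.
Proof.
move=> [_ hd] H.
have cd : c < d.+1.
  case: H => s [Cs E]; rewrite ltnS; apply: hd; by exists (x :: s).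
have := @leq_bigmax_cond _ (fun c : 'I_d.+1 => Pb F x c) (fun c => nat_of_ord c) (Ordinal cd).
by move=> /(_ (proj2 (PbP _ _ _) H)).
Qed.

Lemma dlt_att k n (F : seq (fn k n)) d x : chainP F x (dlt F d x).
Proof.
have P0 : chainP F x 0 by exists [::].
have c0 : 0 < #|[pred c : 'I_d.+1 | Pb F x c]|.
  by apply/card_gt0P; exists ord0; rewrite inE; apply/PbP.
case: (@eq_bigmax_cond _ [pred c : 'I_d.+1 | Pb F x c] (fun c => nat_of_ord c) c0).
move=> c0' Hin E; rewrite /dlt.
have -> : \max_(c < d.+1 | Pb F x c) nat_of_ord c = nat_of_ord c0' by rewrite -E.
by apply/PbP; move: Hin; rewrite inE.
Qed.

Lemma jump_neq k n (F : seq (fn k n)) x y : jump F x y -> x != y.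
Proof.
move=> /andP [_ H]; apply/eqP => exy; subst y.
move: H; rewrite (@eq_has _ _ pred0) ?has_pred0 // => f /=; by rewrite ltnn.
Qed.

Lemma dlt_mono k n (F : seq (fn k n)) d x y :
  is_decrease F d -> tle x y -> x != y -> dlt F d y + jump F x y <= dlt F d x.
Proof.
move=> hd xy nxy.
have [s [Cs E]] := dlt_att F d y.
apply: dlt_ge => //; exists (y :: s); split.
- move: Cs => /andP [U S]; apply/andP; split; last by rewrite /= xy.
  rewrite /= in U *; rewrite U andbT.
  have Al : all (tle y) (y :: s) by rewrite /= tle_refl; exact: order_path_min (@tle_trans _ _) S.
  apply/negP => xin; move/allP: Al => /(_ x xin) yx.
  by move/negP: nxy; apply; apply/eqP; apply: tle_anti.
- by rewrite /dC /= -E addnC.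
Qed.

Lemma in_has T (F : seq T) (p : pred T) f : Stdlib.Lists.List.In f F -> p f -> has p F.
Proof.
elim: F => //= g F IH [->|H] pf; first by rewrite pf.
by rewrite IH ?orbT.
Qed.

Lemma addall k' n omegas (l : seq (fn k'.+1 n)) : forall m (C : circuit k'.+1 n m),
  cvalid omegas C -> (forall f, Stdlib.Lists.List.In f l -> relmono C (fun x => nat_of_ord (f x))) ->
  exists m' (C' : circuit k'.+1 n m'),
    [/\ cvalid omegas C', cweight C' = cweight C, ext C C' & realizes C' l].
Proof.
elim: l => [|f l IH] m C V R.
  exists m, C; split => //; first exact: ext_refl.
have [m1 [C1 [V1 W1 E1 Rl]]] := IH m C V (fun g h => R g (or_intror h)).
have [C2 [V2 W2 E2 P2]] := addgate V1 (ext_relmono E1 (R f (or_introl erefl))).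
exists m1.+1, C2; split => //; first by rewrite W2 W1.
  exact: ext_trans E1 E2.
move=> g [<-|gl]; first by exists ord_max.
have [i Hi] := Rl g gl; exists (widen_ord (leqnSn _) i) => x.
by case: E2 => _ E2; rewrite (E2 x i) ?Hi.
Qed.

Lemma exists_max (P : nat -> Prop) b : (exists a, P a) -> (forall w, P w -> w <= b) ->
  exists v, is_max P v.
Proof.
elim: b => [|b IH] [a Pa] Hb.
  exists a; split => // w /Hb; have := Hb a Pa; lia.
case: (classic (P b.+1)) => H.
  by exists b.+1; split.
apply: IH; first by exists a.
move=> w Pw; have := Hb w Pw; rewrite leq_eqVlt => /orP [/eqP E|] //.
by subst w.
Qed.

Lemma digit u A B : A %/ u = B %/ u -> (A <= B) = (A %% u <= B %% u).
Proof. by move=> E; rewrite {1}(divn_eq A u) {1}(divn_eq B u) E leq_add2l. Qed.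

Lemma uC_le k q (w : fn k q) s : uC w s <= k.
Proof. apply/bigmax_leqP => b Hb; exact: dec_size Hb. Qed.

Theorem theorem2 (k : nat) (hk : 2 <= k)
  (omegas : seq (Pk k)) (hp : 0 < size omegas)
  (hnm : forall w, Stdlib.Lists.List.In w omegas -> ~~ monotoneb (projT2 w))
  (n : nat) (F : seq (fn k n)) (d u : nat)
  (hd : is_decrease F d) (hu : is_inv_power_basis omegas u) :
  IB_le omegas F (up_log u d.+1).
Proof.
case: k hk omegas hp hnm F hd hu => // k' hk omegas hp hnm F hd hu.
have u2 : 1 < u.
  case: omegas hp hnm hu => // w0 om _ hnm hu.
  have := hnm w0 (or_introl erefl); clear hnm.
  move: hu; case: w0 => q0 w0 hu /= /forallPn [a /forallPn [b]]; rewrite negb_imply => /andP [ab wab].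
  have nab : a != b by apply/eqP => E; subst b; rewrite leqnn in wab.
  have ch : chain [:: a; b] by rewrite /chain /= inE nab ab.
  have u2 : 2 <= uC w0 [:: a; b].
    have := @leq_bigmax_cond _ (fun bb : (size [:: a; b]).-tuple bool => sorted (fun x y => w0 y < w0 x) (mask bb [:: a; b]))
      (fun bb => size (mask bb [:: a; b])) [tuple true; true].
    by rewrite /= ltnNge wab => /(_ erefl).
  have Hex : exists t, exists s, chain s /\ t = uC w0 s by exists (uC w0 [:: a; b]), [:: a; b].
  have Hbd : forall t, (exists s, chain s /\ t = uC w0 s) -> t <= k'.+1.
    by move=> t [s [_ ->]]; exact: uC_le.
  have [v [[s [Cs Ev]] Hv]] := exists_max Hex Hbd.
  have vu : v <= u.
    apply: hu.2; exists (existT _ q0 w0); split; first by right; left.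
    by split; [exists s | ].
  apply: leq_trans vu; apply: leq_trans u2 _; apply: Hv; by exists [:: a; b].
have [[[q w] [Bw [[s [Cs Eu]] _]]] _] := hu.
have c0 : 0 < #|[pred bb : (size s).-tuple bool | sorted (fun x y => w y < w x) (mask bb s)]|.
  apply/card_gt0P; exists [tuple of nseq (size s) false]; by rewrite inE /= mask_false.
case: (@eq_bigmax_cond _ _ (fun bb : (size s).-tuple bool => size (mask bb s)) c0) => bb Hbb Ebb.
have ua : u = size (mask bb s) by rewrite Eu /uC -Ebb.
set a := mask bb s in ua Hbb.
have S1 : sorted (@tle _ _) a by apply: sorted_mask; [exact: tle_trans | case/andP: Cs].
have S2 : sorted (fun x y => w y < w x) a by move: Hbb; rewrite inE.
pose D x := d - dlt F d x.
have Dmono x y : tle x y -> D x <= D y.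
  move=> xy; case: (eqVneq x y) => [->//|nxy].
  have := dlt_mono hd xy nxy; rewrite /D; lia.
have Djump x y : jump F x y -> D x < D y.
  move=> J; have xy : tle x y by case/andP: J.
  have := dlt_mono hd xy (jump_neq J); rewrite J /D.
  have := dlt_le F d x; lia.
pose e := up_log u d.+1.
have he : d.+1 <= u ^ e := up_logP _ u2.
pose Inv m (C : circuit k'.+1 n m) j := forall x y, tle (cval C x) (cval C y) ->
  tle x y /\ D y %/ u ^ j <= D x %/ u ^ j.
have claim : forall i, i <= e -> exists m (C : circuit k'.+1 n m),
    [/\ cvalid omegas C, cweight C <= i & Inv m C (e - i)].
  elim => [|i IH] hi.
    exists n, CInputs; split => // x y H; split => //.
    rewrite subn0 (@divn_small (D y)) //.
    apply: leq_ltn_trans (leq_subr _ _) _; exact: he.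
  have [m [C [V W I]]] := IH (ltnW hi).
  pose j := e - i.+1.
  have ej : e - i = j.+1 by rewrite /j; lia.
  pose t x := (D x %/ u ^ j) %% u.
  have u0 : 0 < u by lia.
  have tlt x : t x < size a by rewrite -ua ltn_pmod.
  have top x y : tle x y -> D y %/ u ^ j.+1 <= D x %/ u ^ j.+1 ->
      (D x %/ u ^ j) %/ u = (D y %/ u ^ j) %/ u.
    move=> xy le; rewrite -!divnMA -expnSr; apply/eqP; rewrite eqn_leq le andbT.
    exact: leq_div2r (Dmono _ _ xy).
  have R : relmono C t.
    move=> x y H; have [xy le] := I x y H; rewrite ej in le.
    rewrite /t -digit; first exact: leq_div2r (Dmono _ _ xy).
    exact: top.
  have [m' [C' [i0 [V' W' E' P']]]] := gadget Bw S1 S2 V tlt R.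
  exists m', C'; split => //; first exact: leq_trans W' _.
  move=> x y H; have [xy le] := I x y (ext_tle E' H); rewrite ej in le; split => //.
  have Hi := forallP H i0; rewrite !P' in Hi.
  have tyx : t y <= t x.
    have := tlt x; have := tlt y; move: Hi; case: (size a) => // sa /=; lia.
  rewrite (@digit u (D y %/ u ^ j) (D x %/ u ^ j)) //; symmetry; exact: top.
have [m [C [V W I]]] := claim e (leqnn e).
have {}I : forall x y, tle (cval C x) (cval C y) -> tle x y /\ D y <= D x.
  by move=> x y H; have := I x y H; rewrite subnn expn0 !divn1.
have R : forall f, Stdlib.Lists.List.In f F -> relmono C (fun x => nat_of_ord (f x)).
  move=> f fF x y H; have [xy le] := I x y H.
  rewrite leqNgt; apply/negP => lt.
  have J : jump F x y by rewrite /jump xy (in_has (p := fun g : fn _ _ => g y < g x) fF).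
  have := Djump _ _ J; lia.
have [m' [C' [V' W' _ R']]] := addall V R.
by exists m', C'; split => //; rewrite W'.
Qed.
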